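(* An element $T\in\underline{SST}(\nu)$ is distinguished if and only if $\sum_{j=1}^k\mathrm{wt}(T_j)=0$.
   Context: Identify a partition $\lambda=(a_1\ge a_2\ge\cdots)$ with $\sum_ja_j\epsilon_j$ in $\Lambda=\bigoplus_{j\ge1}\mathbb Z\epsilon_j$; put $\omega_i=\epsilon_1+\dots+\epsilon_i$; partitions are exactly the elements of $\Lambda$ with all $\omega$-coordinates $\ge0$. For $x,y\in\Lambda$, $y\le x$ means $x-y$ has all $\omega$-coordinates $\ge0$. $\mathcal P$ = set of partitions, $\mathcal P^k$ = $k$-tuples of partitions. $SST(\nu)$ = semistandard tableaux of shape $\nu$ with entries in $\mathbb Z_{>0}$, with the standard $\mathfrak{gl}_\infty$-crystal structure (operators $\tilde e_i$, $i\ge1$). For $T\in SST(\nu)$: $\mathrm{wt}(T)=\sum_j(\#\text{entries }j)\epsilon_j$, $\varepsilon_i(T)=\max\{m\ge0:\tilde e_i^mT\ne0\}$, $\varepsilon(T)=\sum_i\varepsilon_i(T)\omega_i$. $\mathrm{CLR}^\lambda_{\alpha,\nu}=\{T\in SST(\nu):\varepsilon(T)\le\alpha,\ \alpha+\mathrm{wt}(T)=\lambda\}$. Fix $k\ge1$ and partitions $\nu=(\nu_1^+,\nu_1^-,\dots,\nu_k^+,\nu_k^-)$; indices cyclic mod $k$ ($\lambda_0:=\lambda_k$). $\underline{SST}(\nu)=\prod_{i=1}^kSST(\nu_i^+)\times SST(\nu_i^-)$, elements $T=(T_1^+,T_1^-,\dots,T_k^+,T_k^-)$, $T_i=(T_i^+,T_i^-)$,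 $\mathrm{wt}(T_i)=\mathrm{wt}(T_i^+)-\mathrm{wt}(T_i^-)$. For $\lambda,\alpha\in\mathcal P^k$, $\underline{\mathrm{CLR}}^\lambda_{\alpha,\nu}=\prod_{i=1}^k\mathrm{CLR}^{\lambda_i}_{\alpha_i,\nu_i^+}\times\mathrm{CLR}^{\lambda_{i-1}}_{\alpha_i,\nu_i^-}$. $T\in\underline{SST}(\nu)$ is called distinguished if $T\in\underline{\mathrm{CLR}}^\lambda_{\alpha,\nu}$ for some $\lambda,\alpha\in\mathcal P^k$. *)

(* Defs.v *)
From mathcomp Require Import all_boot all_order all_algebra.
Set Implicit Arguments. Unset Strict Implicit. Unset Printing Implicit Defensive.
Import Order.TTheory GRing.Theory Num.Theory.

(* An element x of Lambda is represented by its eps-coordinates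
   j |-> x_j (j >= 1); coordinate 0 is unused and always 0 for the
   elements built below. *)
Definition lam := nat -> int.

Definition omega_coord (x : lam) (i : nat) : int := (x i - x i.+1)%R.

Definition lam_le (y x : lam) : Prop :=
  forall i, (0 < i)%N -> (0 <= omega_coord (fun j => x j - y j) i)%R.

Definition is_partition (p : seq nat) : bool :=
  sorted geq p && all (fun a => 0 < a) p.

Definition plam (p : seq nat) : lam :=
  fun j => if j == 0 then 0%R else Posz (nth 0 p j.-1).

(* a tableau is the list of its rows (top row first), English convention *)
Definition tableau := seq (seq nat).

Definition is_SST (nu : seq nat) (t : tableau) : Prop :=
  [/\ map size t = nu,
      all (fun a => 0 < a) (flatten t),
      all (sorted leq) t &
      forall r c, c < size (nth [::] t r.+1) ->
        nth 0 (nth [::] t r) c < nth 0 (nth [::] t r.+1) c].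

Definition wt (t : tableau) : lam := fun j => Posz (count_mem j (flatten t)).

Definition reading_word (t : tableau) : seq nat := flatten (rev t).

(* signature rule: letters i+1 act as '(' and letters i as ')'; a letter
   i+1 is unmatched iff no free i remains in the suffix after it.
   free i s = number of letters i of s not matched by an i+1 of s. *)
Definition free (i : nat) (s : seq nat) : nat :=
  foldr (fun a c => if a == i then c.+1 else if a == i.+1 then c.-1 else c) 0 s.

(* e_i on words: change the leftmost unmatched i+1 into i (None = 0) *)
Fixpoint e_word (i : nat) (w : seq nat) : option (seq nat) :=
  match w with
  | [::] => None
  | a :: s => if (a == i.+1) && (free i s == 0) then Some (i :: s)
              else omap (cons a) (e_word i s)
  end.

(* e_i on tableaux: act on the reading word, then refill the same shape *)
Definition e_tab (i : nat) (t : tableau) : option tableau :=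
  omap (fun w => rev (reshape (map size (rev t)) w)) (e_word i (reading_word t)).

Definition iter_e (i m : nat) (t : tableau) : option tableau :=
  iter m (fun o => obind (e_tab i) o) (Some t).

(* eps_i(T) = max { m >= 0 : e_i^m T <> 0 }  (m is bounded by the number
   of entries, since each application turns an i+1 into an i) *)
Definition eps_i (i : nat) (t : tableau) : nat :=
  \max_(m < (size (flatten t)).+1 | iter_e i m t != None) m.

(* largest entry; eps_i(T) = 0 for i >= maxentry T *)
Definition maxentry (t : tableau) : nat := foldr maxn 0 (flatten t).

(* eps(T) = sum_{i>=1} eps_i(T) omega_i ; omega_i = eps_1 + ... + eps_i,
   so the eps_j-coordinate (j >= 1) is sum_{i >= j} eps_i(T). *)
Definition eps_vec (t : tableau) : lam :=
  fun j => if j == 0 then 0%R else Posz (\sum_(j <= i < maxentry t) eps_i i t).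

Definition inCLR (lambda alpha nu : seq nat) (t : tableau) : Prop :=
  [/\ is_SST nu t, lam_le (eps_vec t) (plam alpha) &
      forall j, (plam alpha j + wt t j)%R = plam lambda j].

(* Indices i = 0..k-1 (standing for 1..k); predecessor mod k. *)
Definition cpred (k i : nat) : nat := (i + k.-1) %% k.

(* nu i = (nu_i^+, nu_i^-),  T i = (T_i^+, T_i^-) *)
Definition distinguished (k : nat) (nu : nat -> seq nat * seq nat)
  (T : nat -> tableau * tableau) : Prop :=
  exists (lambda alpha : nat -> seq nat),
    (forall i, i < k -> is_partition (lambda i) /\ is_partition (alpha i)) /\
    (forall i, i < k ->
       inCLR (lambda i) (alpha i) (nu i).1 (T i).1 /\
       inCLR (lambda (cpred k i)) (alpha i) (nu i).2 (T i).2).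

(* Main.v *)
Require Import Defs.
From mathcomp Require Import all_boot all_order all_algebra zify.
Import Order.TTheory GRing.Theory Num.Theory.
Set Warnings "-notation-overridden -ambiguous-paths".

Lemma mem_maxentry_le (s : seq nat) x : x \in s -> x <= foldr maxn 0 s.
Proof.
elim: s => //= a s IH; rewrite inE => /orP [/eqP -> | /IH h]; first exact: leq_maxl.
exact: leq_trans h (leq_maxr _ _).
Qed.

Lemma wt_big t j : maxentry t < j -> wt t j = 0%R.
Proof.
move=> hj; rewrite /wt; congr Posz; apply/count_memPn; apply/negP => /mem_maxentry_le.
move: hj; rewrite /maxentry; lia.
Qed.

Lemma wt0 nu t : is_SST nu t -> wt t 0 = 0%R.
Proof.
case=> _ hpos _ _; rewrite /wt; congr Posz; apply/count_memPn; apply/negP => h.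
by move/allP: hpos => /(_ _ h).
Qed.

Lemma wt_le t j : (wt t j <= (size (flatten t))%:Z)%R.
Proof. by rewrite /wt lez_nat count_size. Qed.

Lemma eps_i_le i t : eps_i i t <= size (flatten t).
Proof. by apply/bigmax_leqP => m _; rewrite -ltnS. Qed.

Lemma eps_diff_le t i : (eps_vec t i.+1 - eps_vec t i.+2 <= (size (flatten t))%:Z)%R.
Proof.
rewrite /eps_vec /=.
case: (ltnP i.+1 (maxentry t)) => h.
  rewrite big_ltn //= PoszD addrK lez_nat; exact: eps_i_le.
by rewrite !big_geq //= ?subrr // (leq_trans h).
Qed.

Lemma eps_diff_0 t i : maxentry t <= i.+1 -> (eps_vec t i.+1 - eps_vec t i.+2 = 0)%R.
Proof. by move=> h; rewrite /eps_vec /= !big_geq //= ?subrr // (leq_trans h). Qed.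

Definition toseq (N : nat) (f : lam) : seq nat := mkseq (fun j => `|f j.+1|%N) N.

Lemma plam_toseq N f : f 0 = 0%R -> (forall j, N < j -> f j = 0%R) ->
  (forall j, 0 < j <= N -> (0 <= f j)%R) -> forall j, plam (toseq N f) j = f j.
Proof.
move=> h0 hbig hpos [|j] //=; rewrite /plam /= /toseq.
case: (ltnP j N) => hj.
  by rewrite nth_mkseq // abszE ger0_norm // hpos.
by rewrite nth_default ?size_mkseq // hbig.
Qed.

Lemma part_toseq N f : (forall j, 0 < j <= N -> (0 < f j)%R) ->
  (forall j, 0 < j < N -> (f j.+1 <= f j)%R) -> is_partition (toseq N f).
Proof.
move=> hpos hdec; apply/andP; split.
  apply/(sortedP 0) => i; rewrite size_mkseq => hi.
  rewrite !nth_mkseq //; try lia.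
  have h1 := hpos i.+1; have h2 := hpos i.+2; have h3 := hdec i.+1.
  rewrite /geq /=; lia.
apply/allP => x /mapP [j]; rewrite mem_iota => /andP [_ hj] ->.
have := hpos j.+1; lia.
Qed.

Lemma term_le_sum (F : nat -> nat) i k : i < k -> F i <= \sum_(0 <= m < k) F m.
Proof. by move=> hi; rewrite big_mkord (bigD1 (Ordinal hi)) //= leq_addr. Qed.

Lemma sum_widen_le (F : nat -> nat) i k : i <= k -> \sum_(0 <= m < i) F m <= \sum_(0 <= m < k) F m.
Proof. by move=> hik; rewrite (big_cat_nat (leq0n i) hik) /= leq_addr. Qed.

Lemma sumPosz (F : nat -> nat) i : Posz (\sum_(0 <= m < i) F m) = (\sum_(0 <= m < i) (F m)%:Z)%R.
Proof. elim: i => [|i IH]; first by rewrite !big_geq. by rewrite !big_nat_recr //= PoszD IH. Qed.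

Theorem mainTheorem8 (k : nat) (nu : nat -> seq nat * seq nat)
  (T : nat -> tableau * tableau) :
  0 < k ->
  (forall i, i < k -> is_partition (nu i).1 /\ is_partition (nu i).2) ->
  (forall i, i < k -> is_SST (nu i).1 (T i).1 /\ is_SST (nu i).2 (T i).2) ->
  (distinguished k nu T <->
   forall j : nat, (\sum_(i < k) (wt (T i).1 j - wt (T i).2 j) = 0)%R).
Proof.
move=> hk _ hSST; split.
  move=> [lambda [alpha [_ hc]]] j.
  pose g i := plam (lambda i) j.
  rewrite (eq_bigr (fun i : 'I_k => g i - g (cpred k i))%R); last first.
    move=> i _; have [[_ _ h1] [_ _ h2]] := hc i (ltn_ord i).
    rewrite /g -(h1 j) -(h2 j); lia.
  rewrite sumrB; apply/eqP; rewrite subr_eq0; apply/eqP.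
  case: k hk {hc hSST} => // k' _.
  rewrite [in RHS]big_ord_recl big_ord_recr /= addrC; congr (_ + _)%R.
    by rewrite /cpred add0n modn_small.
  apply: eq_bigr => i _; congr g; rewrite /cpred /bump /=.
  have hi := ltn_ord i.
  have -> : (1 + i + k' = i + k'.+1)%N by lia.
  by rewrite modnDr modn_small // ltnS ltnW.
move=> hsum.
set B := \sum_(0 <= m < k) (size (flatten (T m).1) + size (flatten (T m).2)).
set N := \sum_(0 <= m < k) (maxentry (T m).1 + maxentry (T m).2).
pose C : int := Posz (3 * B + 1).
pose L : lam := fun j => if j == 0 then 0%R else (C * Posz (N.+1 - j))%R.
pose pp i j := \sum_(0 <= m < i) count_mem j (flatten (T m).1).
pose qq i j := \sum_(0 <= m < i) count_mem j (flatten (T m).2).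
pose A i : lam := fun j => (L j + Posz (pp i j) - Posz (qq i.+1 j))%R.
pose La i : lam := fun j => (L j + Posz (pp i.+1 j) - Posz (qq i.+1 j))%R.
have hL0 : L 0 = 0%R by [].
have hL1 : forall j, 0 < j <= N -> (C <= L j)%R.
  move=> j /andP [hj0 hjN]; rewrite /L; case: eqP => [?|_]; first lia.
  have : (1 <= N.+1 - j)%N by lia.
  move: (N.+1 - j)%N => d hd; rewrite -[X in (X <= _)%R]mulr1 ler_wpM2l //; lia.
have hL2 : forall j, 0 < j <= N -> (L j - L j.+1 = C)%R.
  move=> j /andP [hj0 hjN]; rewrite /L; case: eqP => [?|_]; first lia.
  have -> : (N.+1 - j = (N.+1 - j.+1).+1)%N by lia.
  by rewrite /= -addn1 PoszD mulrDr mulr1 addrAC subrr add0r.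
have hL3 : forall j, N < j -> L j = 0%R.
  move=> j hj; rewrite /L; case: eqP => [//|_].
  have -> : (N.+1 - j = 0)%N by lia.
  by rewrite mulr0.
have hsz : forall i, i < k -> size (flatten (T i).1) <= B /\ size (flatten (T i).2) <= B.
  move=> i hi; have := @term_le_sum (fun m => size (flatten (T m).1) + size (flatten (T m).2)) _ _ hi.
  rewrite -/B; lia.
have hme : forall i, i < k -> maxentry (T i).1 <= N /\ maxentry (T i).2 <= N.
  move=> i hi; have := @term_le_sum (fun m => maxentry (T m).1 + maxentry (T m).2) _ _ hi.
  rewrite -/N; lia.
have hpq : forall i j, i <= k -> pp i j <= B /\ qq i j <= B.
  move=> i j hi; rewrite /pp /qq; split.
    apply: (@leq_trans (\sum_(0 <= m < i) size (flatten (T m).1))).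
      by apply: leq_sum => m _; apply: count_size.
    apply: (leq_trans (sum_widen_le _ _ _ hi)).
    by apply: leq_sum => m _; apply: leq_addr.
  apply: (@leq_trans (\sum_(0 <= m < i) size (flatten (T m).2))).
    by apply: leq_sum => m _; apply: count_size.
  apply: (leq_trans (sum_widen_le _ _ _ hi)).
  by apply: leq_sum => m _; apply: leq_addl.
have hpq0 : forall i, i <= k -> pp i 0 = 0 /\ qq i 0 = 0.
  move=> i hi; rewrite /pp /qq; split; rewrite big_nat_cond big1 // => m /andP [/andP [_ hm] _];
  have := hSST m (leq_trans hm hi) => -[h1 h2].
    by have := @wt0 _ _ h1; rewrite /wt => -[].
  by have := @wt0 _ _ h2; rewrite /wt => -[].
have hpqbig : forall i j, i <= k -> N < j -> pp i j = 0 /\ qq i j = 0.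
  move=> i j hi hj; rewrite /pp /qq; split; rewrite big_nat_cond big1 // => m /andP [/andP [_ hm] _];
  have := hme m (leq_trans hm hi) => -[h1 h2].
    by have := @wt_big (T m).1 j (leq_ltn_trans h1 hj); rewrite /wt => -[].
  by have := @wt_big (T m).2 j (leq_ltn_trans h2 hj); rewrite /wt => -[].
have gen : forall f : lam, f 0 = 0%R -> (forall j, N < j -> f j = 0%R) ->
    (forall j, (L j - Posz B <= f j <= L j + Posz B)%R) ->
    [/\ forall j, plam (toseq N f) j = f j, is_partition (toseq N f) &
       forall j, 0 < j <= N -> (Posz B <= f j - f j.+1)%R].
  move=> f h0 hbig hb.
  have hpos : forall j, 0 < j <= N -> (0 < f j)%R.
    move=> j hj; have := hL1 j hj; have := hb j; rewrite /C; lia.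
  have hdiff : forall j, 0 < j <= N -> (Posz B <= f j - f j.+1)%R.
    move=> j hj; have := hL2 j hj; have := hb j; have := hb j.+1; rewrite /C; lia.
  split => //.
  - apply: plam_toseq => // j hj; exact: ltW (hpos j hj).
  - apply: part_toseq => // j hj.
    have := hdiff j; lia.
have hAz : forall i j, i < k -> N < j -> A i j = 0%R.
  move=> i j hi hj; have [h1 _] := hpqbig i j (ltnW hi) hj.
  have [_ h2] := hpqbig i.+1 j hi hj.
  by rewrite /A h1 h2 hL3 // !addr0 subr0.
have hA : forall i, i < k -> [/\ forall j, plam (toseq N (A i)) j = A i j,
    is_partition (toseq N (A i)) &
    forall j, 0 < j <= N -> (Posz B <= A i j - A i j.+1)%R].
  move=> i hi; apply: gen.
  - have [h1 _] := hpq0 i (ltnW hi); have [_ h2] := hpq0 i.+1 hi.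
    by rewrite /A h1 h2 hL0.
  - by move=> j hj; apply: hAz.
  - move=> j; have [h1 _] := hpq i j (ltnW hi); have [_ h2] := hpq i.+1 j hi.
    rewrite /A; lia.
have hLa : forall i, i < k -> [/\ forall j, plam (toseq N (La i)) j = La i j,
    is_partition (toseq N (La i)) &
    forall j, 0 < j <= N -> (Posz B <= La i j - La i j.+1)%R].
  move=> i hi; apply: gen.
  - have [h1 h2] := hpq0 i.+1 hi.
    by rewrite /La h1 h2 hL0.
  - move=> j hj; have [h1 h2] := hpqbig i.+1 j hi hj.
    by rewrite /La h1 h2 hL3 // !addr0 subr0.
  - move=> j; have [h1 h2] := hpq i.+1 j hi.
    rewrite /La; lia.
have omg : forall i t, i < k -> size (flatten t) <= B -> maxentry t <= N ->
    lam_le (eps_vec t) (plam (toseq N (A i))).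
  move=> i t hi hs hm [|i0] // _; have [hAe _ hAd] := hA i hi.
  rewrite /omega_coord /= !hAe.
  case: (leqP i0.+1 N) => h.
    have := hAd i0.+1 h; have := eps_diff_le t i0; lia.
  rewrite !hAz //; last by apply: ltnW.
  have := eps_diff_0 t i0 (leq_trans hm (ltnW h)); lia.
have hpk : forall j, pp k j = qq k j.
  move=> j; have := hsum j; rewrite sumrB => /eqP; rewrite subr_eq0 => /eqP.
  rewrite -(big_mkord xpredT (fun i => wt (T i).1 j)).
  rewrite -(big_mkord xpredT (fun i => wt (T i).2 j)) => h.
  apply/eqP; rewrite -eqz_nat /pp /qq !sumPosz; apply/eqP; exact: h.
exists (fun i => toseq N (La i)), (fun i => toseq N (A i)); split.
  move=> i hi; have [_ ? _] := hA i hi; have [_ ? _] := hLa i hi; done.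
move=> i hi; have [hAe _ _] := hA i hi; have [hLe _ _] := hLa i hi.
have [hs1 hs2] := hsz i hi; have [hm1 hm2] := hme i hi.
have [hS1 hS2] := hSST i hi.
split; split => //; try exact: omg.
  move=> j; rewrite hAe hLe /A /La /wt /pp big_nat_recr //= PoszD; lia.
have hc : cpred k i < k by rewrite /cpred ltn_mod.
have [hLe' _ _] := hLa _ hc.
move=> j; rewrite hAe hLe' /A /La /wt.
case: i hi {hAe hLe hLe' hs1 hs2 hm1 hm2 hS1 hS2 hc} => [|i'] hi.
  have -> : cpred k 0 = k.-1 by rewrite /cpred add0n modn_small // prednK.
  have -> : pp 0 j = 0 by rewrite /pp big_geq.
  rewrite prednK // hpk /qq big_nat_recr //= big_geq // PoszD; lia.
have -> : cpred k i'.+1 = i'.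
  rewrite /cpred; have -> : (i'.+1 + k.-1 = i' + k)%N by lia.
  by rewrite modnDr modn_small // ltnW.
rewrite /qq (big_nat_recr i'.+1) //= PoszD; lia.
Qed.
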